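(* Let $k$ be a positive integer and let $G \in \mathcal{C}_3$ be a digraph with $n$ vertices and $m \geq 1$ arcs such that $\vec{\chi}(G) = k$. Let $I$ be an independent set of $G$. Then there exists a digraph $H \in \mathcal{C}_3$ containing $m$ pairwise vertex-disjoint copies $G_1,\dots,G_m$ of $G$ such that: (i) for all $1 \leq i \neq j \leq m$, there is no arc of $H$ between $V(G_i)$ and $V(G_j)$; (ii) for every $k$-dicolouring of $H$, there exist an index $i \in \{1,\dots,m\}$ and a colour $\alpha$ such that no vertex of the copy of $I$ in $G_i$ receives colour $\alpha$. Moreover, $H$ has $n(m+1) \leq n^4$ vertices and at most $m(m+1) + m n^2 \leq n^4$ arcs.
   Context: All digraphs are finite and simple: no loops, no multiple arcs, and for two distinct vertices $u,v$ at most one of the arcs $uv$, $vu$ is present. A $k$-dicolouring of a digraph $D$ is a partition of $V(D)$ into $k$ sets $V_1,\dots,V_k$ (some possibly empty), the colour classes, such that each induced subdigraph $D[V_i]$ is acyclic (contains no directed cycle). The dichromatic number $\vec{\chi}(D)$ is the smallest $k$ such that $D$ admits a $k$-dicolouring. $TT_3$ denotes the transitive tournament on 3 vertices; $\mathcal{C}_3$ is the class of digraphs that contain no $TT_3$ as a subdigraph and contain no induced directed cycle of length at least $4$. An independent set is a set of vertices no two of which are joined by an arc. A copy of $G$ in $H$ is an induced subdigraph of $H$ together with a fixed isomorphism from $G$ onto it; the copy of $I$ in that copy is the image of $I$ under this isomorphism. *)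

(* Defs.v *)
From mathcomp Require Import all_boot.
Set Implicit Arguments. Unset Strict Implicit. Unset Printing Implicit Defensive.

Definition digraph (V : finType) (e : rel V) : Prop :=
  (forall x, ~~ e x x) /\ (forall x y, ~~ (e x y && e y x)).

Definition narcs (V : finType) (e : rel V) : nat :=
  #|[set p : V * V | e p.1 p.2]|.

Definition dicycle (V : finType) (e : rel V) (s : seq V) : Prop :=
  s != [::] /\ uniq s /\ cycle e s.

Definition acyclic_on (V : finType) (e : rel V) (A : {set V}) : Prop :=
  forall s : seq V, {subset s <= A} -> ~ dicycle e s.

Definition dicolouring (V : finType) (e : rel V) (k : nat) (c : V -> 'I_k) : Prop :=
  forall a : 'I_k, acyclic_on e [set x | c x == a].

Definition dicolourable (V : finType) (e : rel V) (k : nat) : Prop :=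
  exists c : V -> 'I_k, dicolouring e c.

Definition dichromatic_eq (V : finType) (e : rel V) (k : nat) : Prop :=
  dicolourable e k /\ forall j, dicolourable e j -> k <= j.

Definition has_TT3 (V : finType) (e : rel V) : Prop :=
  exists x y z : V, [/\ e x y, e y z & e x z].

Definition has_induced_long_cycle (V : finType) (e : rel V) : Prop :=
  exists s : seq V, [/\ dicycle e s, 4 <= size s &
    forall x y, x \in s -> y \in s -> e x y -> y = next s x].

Definition in_C3 (V : finType) (e : rel V) : Prop :=
  digraph e /\ ~ has_TT3 e /\ ~ has_induced_long_cycle e.

Definition independent (V : finType) (e : rel V) (I : {set V}) : Prop :=
  forall x y, x \in I -> y \in I -> ~~ e x y.

Definition is_copy (V W : finType) (eG : rel V) (eH : rel W) (f : V -> W) : Prop :=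
  injective f /\ forall x y, eH (f x) (f y) = eG x y.

(* Main.v *)
Require Import Defs.
From mathcomp Require Import all_boot zify.
From Stdlib Require Import Classical.
Set Implicit Arguments. Unset Strict Implicit. Unset Printing Implicit Defensive.

Lemma path_cross (T : eqType) (e : rel T) (P : pred T) x0 p :
  path e x0 p -> P x0 -> has (predC P) p ->
  exists x y, [/\ x \in x0 :: p, y \in x0 :: p, P x, ~~ P y & e x y].
Proof.
elim: p x0 => [//|z p IH] x0 /= /andP[ex pp] Px0 /orP[nPz|hp].
  by exists x0, z; split; rewrite ?inE ?eqxx ?orbT.
case Pz: (P z).
  have [x [y [hx hy Px nPy exy]]] := IH z pp Pz hp.
  exists x, y; split=> //; rewrite inE; apply/orP; right => //.
by exists x0, z; split; rewrite ?inE ?eqxx ?orbT ?Pz.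
Qed.

Lemma next3 (T : eqType) (s : seq T) x y w :
  uniq s -> 4 <= size s -> x \in s -> next s x = y -> next s y = w ->
  next s w = x -> False.
Proof.
move=> us ss xs.
case: (rot_to xs) => i t ht.
have us' : uniq (rot i s) by rewrite rot_uniq.
rewrite -!(next_rot i us) ht.
have : 4 <= size (rot i s) by rewrite size_rot.
rewrite ht in us' *.
case: t ht us' => [|y1 [|y2 [|y3 t']]] //= _ us' _.
move: us'; rewrite !inE !negb_or => /andP[/and3P[n1 n2 /andP[n3 n4]] /andP[/andP[m1 /andP[m2 m3]] /andP[/andP[k1 k2] _]]].
rewrite eqxx => hy; subst y.
rewrite eq_sym (negbTE n1) eqxx => hw; subst w.
rewrite eq_sym (negbTE n2) eq_sym (negbTE m1) eqxx => h.
by rewrite h eqxx in n3.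
Qed.

Lemma shortcut (T : finType) (e : rel T) s x y :
  (forall z, ~~ e z z) -> dicycle e s -> x \in s -> y \in s -> e x y ->
  y != next s x ->
  exists s', dicycle e s' /\ {subset s' <= s} /\ size s' < size s.
Proof.
move=> irr [ne [us cs]] xs ys exy nxy.
case: (rot_to ys) => i t ht.
have us' : uniq (rot i s) by rewrite rot_uniq.
have cs' : cycle e (rot i s) by rewrite rot_cycle.
have sz : size s = size (y :: t) by rewrite -ht size_rot.
have sub : {subset y :: t <= s} by move=> z; rewrite -ht mem_rot.
rewrite -(next_rot i us) ht in nxy.
rewrite ht in us' cs'.
have xy : x != y by apply: contraNneq (irr x) => hxy; rewrite {2}hxy.
have xt : x \in t by move: (xs); rewrite -(mem_rot i) ht inE (negbTE xy).
case/splitPr: xt us' cs' nxy sz sub => t1 t2 us' cs' nxy sz sub.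
exists (y :: rcons t1 x); split; last split.
- split=> //; split.
  + move: us'; rewrite /= -cats1 !mem_cat !cat_uniq /= !inE !negb_or.
    by case/and5P=> /and3P[-> -> _] -> /andP[-> _] _ _.
  + move: cs'; rewrite /= rcons_cat cat_path rcons_path /=.
    rewrite !rcons_path last_rcons => /and3P[-> /andP[-> _] _]; exact: exy.
- move=> z; rewrite /= inE mem_rcons inE => hz; apply: sub.
  by rewrite inE mem_cat inE; case/orP: hz => [->|/orP[->|->]]; rewrite ?orbT.
- case: t2 nxy sz us' {cs' sub} => [|z t2] nxy sz us'; last first.
    by rewrite sz /= size_rcons size_cat /=; lia.
  exfalso; move: nxy; rewrite next_nth.
  have xin : x \in y :: t1 ++ [:: x] by rewrite inE mem_cat inE eqxx !orbT.
  rewrite xin /= [y == x]eq_sym (negbTE xy) index_cat.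
  have -> : (x \in t1) = false.
    by move: us'; rewrite /= cat_uniq /= => /and3P[_ _ /andP[/norP[/negbTE -> _] _]].
  rewrite /= eqxx addn0 nth_default ?eqxx // size_cat /= addn1 //.
Qed.

Lemma bip_acyclic (V : finType) (e : rel V) (A : {set V}) (f : V -> bool) :
  in_C3 e -> (forall x y, x \in A -> y \in A -> e x y -> f x != f y) ->
  acyclic_on e A.
Proof.
move=> [[irr asym] [noTT noLC]] hf.
suff H : forall N s, size s < N -> {subset s <= A} -> ~ dicycle e s.
  by move=> s; apply: (H (size s).+1).
elim=> [//|N IH] s hN sA ds.
case: (boolP (has (fun x => has (fun y => e x y && (y != next s x)) s) s)).
  case/hasP => x xs /hasP[y ys /andP[exy nxy]].
  have [s' [ds' [ss' sz']]] := shortcut irr ds xs ys exy nxy.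
  apply: (IH s') => //; first by rewrite ltnS in hN; apply: leq_trans sz' hN.
  by move=> z /ss' /sA.
move/hasPn=> hn.
have ind : forall x y, x \in s -> y \in s -> e x y -> y = next s x.
  move=> x y xs ys exy; move/hasPn: (hn x xs) => /(_ y ys).
  by rewrite exy /= negbK => /eqP.
case: (leqP 4 (size s)) => hs.
  by apply: noLC; exists s; split.
case: ds => ne [us cs].
have fs : forall x y, x \in s -> y \in s -> e x y -> f x != f y.
  by move=> x y /sA xA /sA yA; apply: hf.
move: ne us cs hs fs; case: s {hN sA hn ind} => [|a [|b [|c [|d t]]]] //=.
- by rewrite (negbTE (irr a)).
- by move=> _ _ /and3P[ab ba _]; move: (asym a b); rewrite ab ba.
- move=> _ _ /and4P[ab bc ca _] _ fs.
  have := fs a b; have := fs b c; have := fs c a.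
  rewrite !inE !eqxx ?orbT ab bc ca.
  by case: (f a); case: (f b); case: (f c) => /= h1 h2 h3; move: (h1 isT isT isT) (h2 isT isT isT) (h3 isT isT isT).
Qed.

Lemma transport_ilc (V W : finType) (eG : rel V) (eH : rel W) (g : V -> W) s0 :
  injective g -> (forall x y, eH (g x) (g y) = eG x y) ->
  dicycle eH (map g s0) -> 4 <= size (map g s0) ->
  (forall x y, x \in map g s0 -> y \in map g s0 -> eH x y -> y = next (map g s0) x) ->
  has_induced_long_cycle eG.
Proof.
move=> ig hg [ne [us cs]] sz ind.
have us0 : uniq s0 by rewrite -(map_inj_uniq ig).
exists s0; split.
- split; first by move: ne; case: s0 {us cs sz ind us0}.
  split=> //; have -> : cycle eG s0 = cycle (relpre g eH) s0.
    by apply: eq_cycle => x y; rewrite /= hg.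
  by rewrite -cycle_map.
- by rewrite size_map in sz.
- move=> x y xs ys exy; apply: (ig); rewrite -(next_map ig us0).
  by apply: ind; rewrite ?mem_map ?hg.
Qed.

Lemma num n m : 2 <= n -> 2 * m <= n * n ->
  [/\ n * (m + 1) <= n ^ 4, m * (n * 2) <= m * n ^ 2 & m * (m + 1) + m * n ^ 2 <= n ^ 4].
Proof.
move=> h1 h2.
have e2 : n ^ 2 = n * n by rewrite expnS expn1.
have e4 : n ^ 4 = (n * n) * (n * n) by rewrite !expnS expn0 muln1 !mulnA.
rewrite e2 e4; set N := n * n.
have hN : 2 * n <= N by rewrite /N leq_mul2r h1 orbT.
split.
- nia.
- by apply: leq_mul => //; rewrite mulnC.
- nia.
Qed.

Section Constr.
Variables (V : finType) (eG : rel V) (I : {set V}).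
Let m := narcs eG.
Definition arcv (j : 'I_m) : V * V :=
  @enum_val _ (mem [set p : V * V | eG p.1 p.2]) j.
Lemma arcP j : eG (arcv j).1 (arcv j).2.
Proof. by have := enum_valP j; rewrite inE. Qed.

Definition eH : rel (V * option 'I_m) := fun p q =>
  match p.2, q.2 with
  | None, None => eG p.1 q.1
  | Some i, Some j => (i == j) && eG p.1 q.1
  | None, Some j => (q.1 \in I) && (p.1 == (arcv j).2)
  | Some i, None => (p.1 \in I) && (q.1 == (arcv i).1)
  end.

Hypothesis C3 : in_C3 eG.
Hypothesis hI : forall x y, x \in I -> y \in I -> ~~ eG x y.

Lemma irrG x : ~~ eG x x. Proof. by case: C3 => [[]]. Qed.
Lemma asymG x y : eG x y -> eG y x -> False.
Proof. by case: C3 => [[_ h] _] a b; move: (h x y); rewrite a b. Qed.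
Lemma noTTG : ~ has_TT3 eG. Proof. by case: C3 => _ []. Qed.
Lemma noLCG : ~ has_induced_long_cycle eG. Proof. by case: C3 => _ []. Qed.

Lemma eH_digraph : digraph eH.
Proof.
split.
  by case=> a [i|]; rewrite /eH /= ?eqxx /=; apply: irrG.
case=> a [i|] [b [j|]]; rewrite /eH /=; apply/negP.
- by case/andP=> /andP[_ h1] /andP[_ h2]; apply: (asymG h1 h2).
- case/andP=> /andP[_ /eqP h1] /andP[_ /eqP h2].
  by move: (arcP i); rewrite -h1 -h2 (negbTE (irrG b)).
- case/andP=> /andP[_ /eqP h1] /andP[_ /eqP h2].
  by move: (arcP j); rewrite -h1 -h2 (negbTE (irrG a)).
- by case/andP=> h1 h2; apply: (asymG h1 h2).
Qed.

Lemma eH_noTT : ~ has_TT3 eH.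
Proof.
move=> [[a p] [[b q] [[c r] []]]].
rewrite /eH; case: p q r => [i|] [j|] [k|] /=.
- case/andP=> /eqP <- ab /andP[/eqP <- bc] /andP[_ ac].
  by apply: noTTG; exists a, b, c.
- by case/andP=> _ ab /andP[bI _] /andP[aI _]; move: (hI aI bI); rewrite ab.
- by case/andP=> aI _ /andP[cI _] /andP[_ ac]; move: (hI aI cI); rewrite ac.
- case/andP=> _ /eqP bu bc /andP[_ /eqP cu].
  by move: bc; rewrite bu cu (negbTE (irrG _)).
- by case/andP=> bI _ /andP[_ bc] /andP[cI _]; move: (hI bI cI); rewrite bc.
- case/andP=> _ /eqP av /andP[_ /eqP cu] ac.
  by apply: (asymG (arcP j)); rewrite -av -cu.
- move=> ab /andP[_ /eqP bv] /andP[_ /eqP av].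
  by move: ab; rewrite av bv (negbTE (irrG _)).
- by move=> ab bc ac; apply: noTTG; exists a, b, c.
Qed.

Lemma eH_part p x y : eH (x, p) (y, p) = eG x y.
Proof. by case: p => [i|]; rewrite /eH /= ?eqxx. Qed.

Lemma part_inj (p : option 'I_m) : injective (fun x : V => (x, p)).
Proof. by move=> x y []. Qed.

Lemma cyc_path (T : eqType) (e : rel T) s a :
  uniq s -> cycle e s -> a \in s ->
  exists t, [/\ path e a (rcons t a), {subset a :: rcons t a <= s} &
     forall z, z \in s -> z != a -> z \in rcons t a].
Proof.
move=> us cs as_.
case: (rot_to as_) => i t ht.
have cs' : cycle e (rot i s) by rewrite rot_cycle.
rewrite ht in cs'.
exists t; split=> //.
  move=> z hz; rewrite -(mem_rot i s) ht; move: hz.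
  by rewrite !inE mem_rcons inE; case/orP=> [->|->]; rewrite ?orbT.
move=> z zs za; rewrite mem_rcons inE (negbTE za) /=.
by move: zs; rewrite -(mem_rot i) ht inE (negbTE za).
Qed.

Lemma mixed s a c : uniq s -> cycle eH s -> 4 <= size s ->
  (forall x y, x \in s -> y \in s -> eH x y -> y = next s x) ->
  a \in s -> a.2 = None -> c \in s -> c.2 != None -> False.
Proof.
move=> us cs sz ind as_ a2 cs_ c2.
have [t [pt st mt]] := cyc_path us cs as_.
have cin : c \in rcons t a.
  by apply: mt => //; apply: contra_neq c2 => ->; rewrite a2.
have [[xv xp] [[yb yp] [hx hy px py exy]]] :=
  path_cross (P := fun w => w.2 == None) pt (introT eqP a2)
    (introT hasP (ex_intro2 _ _ c cin c2)).
case: xp hx px exy => // hx _; case: yp hy py => // j hy _ exy.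
move: exy; rewrite /eH /= => /andP[ybI /eqP xvE].
have xs : (xv, None) \in s := st _ hx.
have ys : (yb, Some j) \in s := st _ hy.
have [t2 [pt2 st2 mt2]] := cyc_path us cs ys.
have xin : (xv, None) \in rcons t2 (yb, Some j).
  by apply: mt2 => //; apply/eqP; case.
have hh : has (predC (fun w : V * option 'I_m => w.2 == Some j)) (rcons t2 (yb, Some j)).
  by apply/hasP; exists (xv, None).
have [[zb zp] [[wv wp] [hz hw pz pw ezw]]] :=
  path_cross (P := fun w => w.2 == Some j) pt2 (eqxx _) hh.
move: pz pw ezw => /= /eqP zpE; subst zp.
have zs : (zb, Some j) \in s := st2 _ hz.
have ws : (wv, wp) \in s := st2 _ hw.
clear hw.
case: wp ws => [j'|] ws; rewrite /eH /=.
  by move=> nj /andP[/eqP jj _]; rewrite jj eqxx in nj.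
move=> _ /andP[zbI /eqP wvE].
have ezy : (zb, Some j) = next s (xv, None).
  by apply: ind => //; rewrite /eH /= zbI xvE eqxx.
have eyz : (yb, Some j) = next s (xv, None).
  by apply: ind => //; rewrite /eH /= ybI xvE eqxx.
have ew : (wv, None) = next s (yb, Some j).
  have zy : zb = yb by move: ezy; rewrite -eyz => [[]].
  by apply: ind => //; rewrite /eH /= -zy zbI wvE eqxx.
have ex : (xv, None) = next s (wv, None).
  by apply: ind => //; rewrite /eH /= xvE wvE arcP.
by apply: (next3 us sz xs (esym eyz) (esym ew) (esym ex)).
Qed.

Lemma eH_noLC : ~ has_induced_long_cycle eH.
Proof.
move=> [s [[ne [us cs]] sz ind]].
have [x0 x0s] : exists x0, x0 \in s.
  by case: s ne {us cs sz ind} => // x t _; exists x; rewrite inE eqxx.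
case: (boolP (all (fun w => w.2 == x0.2) s)) => hall.
  have E : s = map (fun v => (v, x0.2)) (map fst s).
    rewrite -map_comp map_id_in // => w /(allP hall) /eqP /= <-; by case: w.
  apply: noLCG.
  have := @transport_ilc V _ eG eH (fun v => (v, x0.2)) (map fst s) (@part_inj x0.2) (@eH_part x0.2).
  by rewrite -E; apply.
case/allPn: hall => z zs nz.
case E0: x0.2 => [j|]; last first.
  by apply: (mixed us cs sz ind x0s E0 zs); rewrite -E0.
have [t [pt st mt]] := cyc_path us cs x0s.
have hh : has (predC (fun w : V * option 'I_m => w.2 == Some j)) (rcons t x0).
  apply/hasP; exists z; last by rewrite /= -E0.
  by apply: mt => //; apply: contra_neq nz => ->.
have [[xb xp] [[yv yp] [hx hy px py exy]]] :=
  path_cross (P := fun w => w.2 == Some j) pt (introT eqP E0) hh.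
move: px py exy => /= /eqP xpE; subst xp.
case: yp hy => [j'|] hy; rewrite /eH /=.
  by move=> nj /andP[/eqP jj _]; rewrite jj eqxx in nj.
move=> _ _.
by apply: (mixed us cs sz ind (st _ hy) (erefl _) (st _ hx)).
Qed.

Lemma narcs_eH : narcs eH <= m * (m + 1) + m * (#|V| * 2).
Proof.
rewrite {1}/narcs.
set A := [set p : V * V | eG p.1 p.2].
have cA : #|A| = m by [].
pose h := fun z : (V * V) * option 'I_m => ((z.1.1, z.2), (z.1.2, z.2)).
pose k := fun z : 'I_m * V * bool =>
  if z.2 then (((arcv z.1.1).2, None), (z.1.2, Some z.1.1))
  else ((z.1.2, Some z.1.1), ((arcv z.1.1).1, None)).
set X := [set h z | z in setX A [set: option 'I_m]].
set Y := [set k z | z in [set: 'I_m * V * bool]].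
have sub : [set p | eH p.1 p.2] \subset X :|: Y.
  apply/subsetP => -[[a p] [b r]]; rewrite inE /= /eH /= => hab.
  rewrite inE; apply/orP.
  case: p r hab => [i|] [j|] /=.
  - case/andP=> /eqP ij ab; subst j; left; apply/imsetP.
    by exists ((a, b), Some i); rewrite /h /= ?inE /= ?ab.
  - case/andP=> aI /eqP bE; right; apply/imsetP.
    by exists (i, a, false); rewrite ?inE // /k /= bE.
  - case/andP=> bI /eqP aE; right; apply/imsetP.
    by exists (j, b, true); rewrite ?inE // /k /= aE.
  - move=> ab; left; apply/imsetP.
    by exists ((a, b), None); rewrite /h /= ?inE /= ?ab.
apply: (leq_trans (subset_leq_card sub)).
apply: (leq_trans (leq_card_setU X Y)).
apply: leq_add.
  rewrite card_imset; last by move=> [[x1 x2] q] [[y1 y2] q'] /= [-> -> ->].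
  by rewrite cardsX cardsT card_option card_ord cA addn1.
apply: (leq_trans (leq_imset_card _ _)).
by rewrite cardsT !card_prod card_bool card_ord mulnA.
Qed.

Lemma colour_arc k (c : V * option 'I_m -> 'I_k) : dicolouring eH c ->
  (forall j a, exists x, x \in I /\ c (x, Some j) = a) ->
  forall u v, eG u v -> c (u, None) != c (v, None).
Proof.
move=> dc full u v euv.
have Auv : (u, v) \in [set p : V * V | eG p.1 p.2] by rewrite inE.
pose j : 'I_m := enum_rank_in Auv (u, v).
have ej : arcv j = (u, v) by rewrite /arcv /j enum_rankK_in.
apply/eqP => cuv.
have [x [xI cx]] := full j (c (u, None)).
apply: (dc (c (u, None)) [:: (v, None); (x, Some j); (u, None)]).
  move=> z hz; rewrite inE; move: hz; rewrite !inE.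
  by case/or3P => /eqP ->; rewrite ?cx ?cuv.
have vu : v != u.
  by apply: contraNneq (irrG u) => e; rewrite -[X in eG u X]e.
split=> //; split.
  rewrite /= !inE !negb_or !andbT /= vu /= andbT; apply/andP; split; apply/eqP; case=> //.
by rewrite /= /eH /= xI ej /= !eqxx euv.
Qed.

Lemma no_proper k (c0 : V -> 'I_k) : dichromatic_eq eG k -> 0 < m ->
  (forall u v, eG u v -> c0 u != c0 v) -> False.
Proof.
move=> dk hm hc.
pose j : 'I_m := Ordinal hm.
have a := arcP j.
case: k c0 dk hc => [|[|k']] c0 dk hc.
- by case: (c0 (arcv j).1).
- by move: (hc _ _ a); rewrite (ord1 (c0 (arcv j).1)) (ord1 (c0 (arcv j).2)) eqxx.
have : k'.+2 <= k'.+1; last by rewrite ltnn.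
apply: dk.2.
pose c1 := fun x => (inord (if val (c0 x) == k'.+1 then 0 else val (c0 x)) : 'I_k'.+1).
exists c1 => b.
apply: (@bip_acyclic _ _ _ (fun x => val (c0 x) == k'.+1) C3).
move=> x y; rewrite !inE /c1 => /eqP hx /eqP hy exy.
have := hc x y exy; apply: contra => /eqP fxy.
apply/eqP; apply: val_inj.
case fx: (val (c0 x) == k'.+1); rewrite fx in fxy hx.
  by rewrite (eqP fx); move/esym/eqP: fxy => ->.
have fy : (val (c0 y) == k'.+1) = false by rewrite -fxy.
rewrite fy in hy.
have lx : val (c0 x) <= k'.+1.
  by have := ltn_ord (c0 x); rewrite ltnS.
have ly : val (c0 y) <= k'.+1.
  by have := ltn_ord (c0 y); rewrite ltnS.
have lx' : val (c0 x) < k'.+1 by rewrite ltn_neqAle fx lx.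
have ly' : val (c0 y) < k'.+1 by rewrite ltn_neqAle fy ly.
have := congr1 val hx; have := congr1 val hy.
have ix : val (inord (val (c0 x)) : 'I_k'.+1) = val (c0 x) := inordK lx'.
have iy : val (inord (val (c0 y)) : 'I_k'.+1) = val (c0 y) := inordK ly'.
by rewrite ix iy => -> ->.
Qed.

Lemma two_m : 0 < m -> 2 <= #|V| /\ 2 * m <= #|V| * #|V|.
Proof.
move=> hm.
pose j : 'I_m := Ordinal hm.
have a := arcP j.
split.
  have uv : (arcv j).1 != (arcv j).2.
    by apply: contraNneq (irrG (arcv j).1) => e; rewrite -[X in eG _ X]e in a.
  by have := max_card [set (arcv j).1; (arcv j).2]; rewrite cards2 uv.
set A := [set p : V * V | eG p.1 p.2].
pose sw := fun p : V * V => (p.2, p.1).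
have swK : cancel sw sw by case.
have cA' : #|sw @: A| = m by rewrite card_imset //; exact: can_inj swK.
have dis : A :&: sw @: A = set0.
  apply/setP => -[x y]; rewrite !inE /=; apply/negP.
  move=> /andP[xy /imsetP[[p q] pq /= [ex ey]]]; subst x y.
  by move: pq; rewrite inE /= => qp; apply: (asymG xy).
have := max_card (A :|: sw @: A).
by rewrite cardsU dis cards0 subn0 cA' card_prod mul2n -addnn.
Qed.
End Constr.

Theorem lemma1 (k : nat) (V : finType) (eG : rel V) (I : {set V}) :
  0 < k ->
  in_C3 eG ->
  1 <= narcs eG ->
  dichromatic_eq eG k ->
  independent eG I ->
  let n := #|V| in
  let m := narcs eG in
  exists (W : finType) (eH : rel W) (phi : 'I_m -> V -> W),
    in_C3 eH /\
    (forall i, is_copy eG eH (phi i)) /\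
    (forall i j x y, i != j -> phi i x != phi j y) /\
    (forall i j x y, i != j -> ~~ eH (phi i x) (phi j y)) /\
    (forall c : W -> 'I_k, dicolouring eH c ->
       exists (i : 'I_m) (a : 'I_k), forall x, x \in I -> c (phi i x) != a) /\
    #|W| = n * (m + 1) /\ n * (m + 1) <= n ^ 4 /\
    narcs eH <= m * (m + 1) + m * n ^ 2 /\ m * (m + 1) + m * n ^ 2 <= n ^ 4.
Proof.
move=> k0 C3 hm dk hI n m.
have [n2 m2] := two_m C3 hm.
have [b1 b2 b3] := num n2 m2.
exists (V * option 'I_m)%type, (@eH V eG I), (fun i x => (x, Some i)).
split; first by split; [exact: eH_digraph | split; [exact: eH_noTT | exact: eH_noLC]].
split; first by move=> i; split; [exact: part_inj | exact: eH_part].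
split; first by move=> i j x y ij; apply/eqP => -[_ e]; rewrite e eqxx in ij.
split; first by move=> i j x y ij; rewrite /eH /= (negbTE ij).
split.
  move=> c dc.
  case: (classic (exists (i : 'I_m) (a : 'I_k), forall x, x \in I -> c (x, Some i) != a)) => // h.
  exfalso.
  have full : forall j a, exists x, x \in I /\ c (x, Some j) = a.
    move=> j a; apply: NNPP => hn; apply: h; exists j, a => x xI.
    by apply/eqP => e; apply: hn; exists x.
  exact: (no_proper C3 dk hm (colour_arc C3 dc full)).
split; first by rewrite card_prod card_option card_ord addn1.
split=> //; split=> //.
apply: leq_trans (@narcs_eH V eG I) _.
by rewrite /m /n leq_add2l.
Qed.
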